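(* For every $n,m\in\mathbb N^*$, Hermitian $H_0,\dots,H_m\in\mathbb H_n$ and $h_1,\dots,h_m\in\mathbb R$: for every feasible point $X$ of SDP-$\mathbb R$ there exists a feasible point $\tilde X$ of SDP-$\mathbb R$ with $\tilde X_{11}=0$ and $\operatorname{Tr}(\Lambda(H_i)\tilde X)=\operatorname{Tr}(\Lambda(H_i)X)$ for all $i=0,\dots,m$. In particular, adding the constraint $X_{11}=0$ to SDP-$\mathbb R$ does not change its optimal value.
   Context: $\mathbb H_n$: Hermitian $n\times n$ matrices; $\mathbb S_{2n}$: real symmetric $2n\times2n$ matrices; $\Lambda(Z):=\begin{pmatrix}\operatorname{Re}Z&-\operatorname{Im}Z\\ \operatorname{Im}Z&\operatorname{Re}Z\end{pmatrix}$. SDP-$\mathbb R$: $\inf_{X\in\mathbb S_{2n}}\operatorname{Tr}(\Lambda(H_0)X)$ s.t. $\operatorname{Tr}(\Lambda(H_i)X)\le h_i$, $i=1,\dots,m$, and $X\succeq0$. *)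

(* Defs.v *)
(* Complex numbers: an arbitrary numClosedFieldType C
   (e.g. algC); real numbers are the elements x of C with x \is Num.real. *)
From HB Require Import structures.
From mathcomp Require Import all_boot all_order all_algebra.
Set Implicit Arguments. Unset Strict Implicit. Unset Printing Implicit Defensive.
Import Order.TTheory GRing.Theory Num.Theory.
Local Open Scope ring_scope.

Definition hermitian_mx (C : numClosedFieldType) (n : nat) (Z : 'M[C]_n) : Prop :=
  (map_mx (fun z : C => z^*) Z)^T = Z.

Definition real_mx (C : numClosedFieldType) (p q : nat) (A : 'M[C]_(p, q)) : Prop :=
  forall i j, A i j \is Num.real.

Definition Lambda (C : numClosedFieldType) (n : nat) (Z : 'M[C]_n) : 'M[C]_(n + n) :=
  block_mx (map_mx (fun z => 'Re z) Z) (- map_mx (fun z => 'Im z) Z)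
           (map_mx (fun z => 'Im z) Z) (map_mx (fun z => 'Re z) Z).

Definition real_psd (C : numClosedFieldType) (p : nat) (X : 'M[C]_p) : Prop :=
  [/\ real_mx X, X^T = X &
      forall v : 'rV[C]_p, real_mx v -> 0 <= (v *m X *m v^T) 0 0].

Definition sdpR_feasible (C : numClosedFieldType) (n m : nat)
  (H : 'I_m -> 'M[C]_n) (h : 'I_m -> C) (X : 'M[C]_(n + n)) : Prop :=
  real_psd X /\ forall i, \tr (Lambda (H i) *m X) <= h i.

(* Main.v *)
Require Import Defs.
From HB Require Import structures.
From mathcomp Require Import all_boot all_order all_algebra.
From mathcomp Require Import ring.
Import Order.TTheory GRing.Theory Num.Theory.
Local Open Scope ring_scope.
Set Implicit Arguments. Unset Strict Implicit.

Section Aux.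
Variable C : numClosedFieldType.

Lemma real_mxD p q (A B : 'M[C]_(p,q)) : real_mx A -> real_mx B -> real_mx (A + B).
Proof. by move=> hA hB i j; rewrite mxE rpredD. Qed.
Lemma real_mxN p q (A : 'M[C]_(p,q)) : real_mx A -> real_mx (- A).
Proof. by move=> hA i j; rewrite mxE rpredN. Qed.
Lemma real_mxZ p q k (A : 'M[C]_(p,q)) : k \is Num.real -> real_mx A -> real_mx (k *: A).
Proof. by move=> hk hA i j; rewrite mxE rpredM. Qed.
Lemma real_mxM p q r (A : 'M[C]_(p,q)) (B : 'M[C]_(q,r)) :
  real_mx A -> real_mx B -> real_mx (A *m B).
Proof. by move=> hA hB i j; rewrite mxE rpred_sum // => k _; rewrite rpredM. Qed.
Lemma real_mxT p q (A : 'M[C]_(p,q)) : real_mx A -> real_mx A^T.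
Proof. by move=> hA i j; rewrite mxE. Qed.
Lemma real_mx0 p q : real_mx (0 : 'M[C]_(p,q)).
Proof. by move=> i j; rewrite mxE. Qed.
Lemma real_mx1 p : real_mx (1%:M : 'M[C]_p).
Proof. by move=> i j; rewrite mxE rpred_nat. Qed.
Lemma real_mx_delta p q i0 j0 : real_mx (delta_mx i0 j0 : 'M[C]_(p,q)).
Proof. by move=> i j; rewrite mxE rpred_nat. Qed.
Lemma real_mx_block p1 p2 q1 q2 (A : 'M[C]_(p1,q1)) (B : 'M[C]_(p1,q2))
  (D : 'M[C]_(p2,q1)) (E : 'M[C]_(p2,q2)) :
  real_mx A -> real_mx B -> real_mx D -> real_mx E -> real_mx (block_mx A B D E).
Proof.
move=> hA hB hD hE i j.
case: (split_ordP i) => i' ->; case: (split_ordP j) => j' ->.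
- by rewrite block_mxEul.
- by rewrite block_mxEur.
- by rewrite block_mxEdl.
- by rewrite block_mxEdr.
Qed.

Lemma mx11M p (u : 'M[C]_(1,p)) (w : 'M[C]_(p,1)) :
  (u *m w) 0 0 = \sum_k u 0 k * w k 0.
Proof. by rewrite mxE. Qed.

Lemma mul11 p (A : 'M[C]_(p,1)) (B : 'M[C]_(1,p)) (u : 'rV[C]_p) (w : 'rV[C]_p) :
  (u *m (A *m B) *m w^T) 0 0 = (u *m A) 0 0 * (B *m w^T) 0 0.
Proof. by rewrite mulmxA -mulmxA mxE big_ord1. Qed.

Lemma tr11 (A : 'M[C]_1) : A^T 0 0 = A 0 0.
Proof. by rewrite mxE. Qed.

Definition qf {p} (M : 'M[C]_p) (u w : 'rV[C]_p) := (u *m M *m w^T) 0 0.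

Lemma qfDl p (M : 'M[C]_p) (u1 u2 w : 'rV[C]_p) : qf M (u1 + u2) w = qf M u1 w + qf M u2 w.
Proof. by rewrite /qf !mulmxDl mxE. Qed.
Lemma qfDr p (M : 'M[C]_p) (u w1 w2 : 'rV[C]_p) : qf M u (w1 + w2) = qf M u w1 + qf M u w2.
Proof. by rewrite /qf linearD /= mulmxDr mxE. Qed.
Lemma qfZl p (M : 'M[C]_p) k (u w : 'rV[C]_p) : qf M (k *: u) w = k * qf M u w.
Proof. by rewrite /qf -!scalemxAl mxE. Qed.
Lemma qfZr p (M : 'M[C]_p) k (u w : 'rV[C]_p) : qf M u (k *: w) = k * qf M u w.
Proof. by rewrite /qf linearZ /= -scalemxAr mxE. Qed.
Lemma qfNl p (M : 'M[C]_p) (u w : 'rV[C]_p) : qf M (- u) w = - qf M u w.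
Proof. by rewrite -scaleN1r qfZl mulN1r. Qed.
Lemma qfNr p (M : 'M[C]_p) (u w : 'rV[C]_p) : qf M u (- w) = - qf M u w.
Proof. by rewrite -scaleN1r qfZr mulN1r. Qed.
Lemma qfC p (M : 'M[C]_p) u w : M^T = M -> qf M u w = qf M w u.
Proof. by move=> hM; rewrite /qf -tr11 !trmx_mul hM trmxK mulmxA. Qed.


Lemma qfMD p (A B : 'M[C]_p) u w : qf (A + B) u w = qf A u w + qf B u w.
Proof. by rewrite /qf mulmxDr mulmxDl mxE. Qed.
Lemma qfMN p (A : 'M[C]_p) u w : qf (- A) u w = - qf A u w.
Proof. by rewrite /qf mulmxN mulNmx mxE. Qed.
Lemma qfMZ p k (A : 'M[C]_p) u w : qf (k *: A) u w = k * qf A u w.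
Proof. by rewrite /qf -scalemxAr -scalemxAl mxE. Qed.
Lemma qf_delta p (M : 'M[C]_p) i j : qf M (delta_mx 0 i) (delta_mx 0 j) = M i j.
Proof. by rewrite /qf trmx_delta -rowE -colE !mxE. Qed.

Variable n : nat.
Definition Kmx : 'M[C]_(n + n) := block_mx 0 (- 1%:M) 1%:M 0.

Lemma LK (Z : 'M[C]_n) : Lambda Z *m Kmx = Kmx *m Lambda Z.
Proof.
rewrite /Lambda /Kmx !mulmx_block.
by rewrite !mulmx0 !mul0mx !mulmxN !mulNmx !mulmx1 !mul1mx !addr0 !add0r.
Qed.
Lemma KT : Kmx^T = - Kmx.
Proof.
rewrite /Kmx tr_block_mx !trmx0 linearN /= trmx1.
by rewrite opp_block_mx !oppr0 opprK.
Qed.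
Lemma KK : Kmx *m Kmx = - 1%:M.
Proof.
rewrite /Kmx mulmx_block !mulmx0 !mul0mx !mulmxN !mulmx1 !addr0 !add0r.
by rewrite (scalar_mx_block n n 1) opp_block_mx oppr0.
Qed.
Lemma Kreal : real_mx Kmx.
Proof. apply: real_mx_block; auto using real_mx0, real_mx1, real_mxN. Qed.


Definition Yof (X : 'M[C]_(n+n)) := 2^-1 *: (X - Kmx *m X *m Kmx).

Lemma KTv (v : 'rV[C]_(n+n)) : (v *m Kmx)^T = - (Kmx *m v^T).
Proof. by rewrite trmx_mul KT mulNmx. Qed.

Lemma Y_sym X : X^T = X -> (Yof X)^T = Yof X.
Proof.
move=> hX; rewrite /Yof linearZ /= linearD /= linearN /= !trmx_mul KT hX.
by rewrite !mulmxN !mulNmx !opprK mulmxA.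
Qed.

Lemma Y_comm X : Yof X *m Kmx = Kmx *m Yof X.
Proof.
rewrite /Yof -scalemxAl -scalemxAr; congr (_ *: _).
rewrite mulmxBl mulmxBr -!mulmxA KK !mulmxA KK mulmxN mulmx1 mulNmx mul1mx.
by rewrite !mulNmx !opprK addrC.
Qed.

Lemma Y_real X : real_mx X -> real_mx (Yof X).
Proof.
move=> hX; apply: real_mxZ; first by rewrite rpredV rpred_nat.
apply: real_mxD => //; apply: real_mxN; apply: real_mxM; last exact: Kreal.
by apply: real_mxM => //; exact: Kreal.
Qed.

Lemma Y_psd X : real_psd X -> real_psd (Yof X).
Proof.
case=> hr hs hp; split; [exact: Y_real | exact: Y_sym |].
move=> v hv.
have := hp v hv; have := hp (v *m Kmx) (real_mxM hv Kreal).
rewrite KTv mulmxN => h1 h2.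
have -> : v *m Yof X *m v^T = 2^-1 *: (v *m X *m v^T + - (v *m Kmx *m X *m Kmx *m v^T)).
  by rewrite /Yof -scalemxAr -scalemxAl mulmxBr mulmxBl !mulmxA.
rewrite mxE mxE [X in _ + X]mxE.
apply: mulr_ge0; first by rewrite invr_ge0 ler0n.
by apply: addr_ge0 => //; move: h1; rewrite mxE !mulmxA.
Qed.

Lemma Y_tr X (Z : 'M[C]_n) : \tr (Lambda Z *m Yof X) = \tr (Lambda Z *m X).
Proof.
rewrite /Yof -scalemxAr linearZ /= mulmxBr linearB /=.
have -> : \tr (Lambda Z *m (Kmx *m X *m Kmx)) = - \tr (Lambda Z *m X).
  rewrite mulmxA mxtrace_mulC !mulmxA -LK -[Lambda Z *m Kmx *m Kmx]mulmxA KK mulmxN mulmx1 mulNmx.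
  by rewrite linearN.
have h2 : (2:C) != 0 by rewrite pnatr_eq0.
by rewrite opprK; field.
Qed.



Lemma tr1x (p : nat) (u w : 'rV[C]_p) : (u *m w^T) 0 0 = (w *m u^T) 0 0.
Proof. by rewrite -tr11 trmx_mul trmxK. Qed.

Lemma qf_real p (M : 'M[C]_p) u w : real_mx M -> real_mx u -> real_mx w -> qf M u w \is Num.real.
Proof.
move=> hM hu hw; apply: (real_mxM (real_mxM hu hM) (real_mxT hw)).
Qed.

Section Main.
Variable Y : 'M[C]_(n+n).
Hypothesis hY : real_psd Y.
Hypothesis hYK : Y *m Kmx = Kmx *m Y.
Variable i0 : 'I_(n+n).

Let hYs : Y^T = Y. Proof. by case: hY. Qed.
Let hYr : real_mx Y. Proof. by case: hY. Qed.

Lemma qfK u w : qf Y u (w *m Kmx) = - qf Y (u *m Kmx) w.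
Proof.
by rewrite /qf KTv mulmxN -!mulmxA (mulmxA Y) hYK !mulmxA mxE.
Qed.

Definition e : 'rV[C]_(n+n) := delta_mx 0 i0.
Definition g := e *m Kmx.
Definition a := qf Y e e.
Definition r := e *m Y.
Definition s := r *m Kmx.
Definition Xt := Y + a^-1 *: (s^T *m s - r^T *m r).

Lemma qf_eg : qf Y e g = 0.
Proof.
have h : qf Y e g = - qf Y e g by rewrite {1}qfC // /g qfK opprK.
have : 2 * qf Y e g = 0 by rewrite mulr2n mulrDl mul1r {1}h addNr.
by move/eqP; rewrite mulf_eq0 pnatr_eq0 /= => /eqP.
Qed.

Lemma qf_gg : qf Y g g = a.
Proof. by rewrite /g qfK -mulmxA KK mulmxN mulmx1 qfNl opprK. Qed.

Lemma qf_Xt v : qf Xt v v =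
  qf Y v v + a^-1 * (qf Y v g * qf Y v g - qf Y v e * qf Y v e).
Proof.
have hs1 : (v *m s^T) 0 0 = qf Y v g.
  rewrite /qf /s /r /g !trmx_mul hYs KT !mulNmx !mulmxN !mulmxA.
  by rewrite -(mulmxA v Y) hYK mulmxA.
have hr1 : (v *m r^T) 0 0 = qf Y v e by rewrite /qf /r trmx_mul hYs mulmxA.
rewrite /Xt qfMD qfMZ qfMD qfMN /qf !mul11.
by rewrite (tr1x s) (tr1x r) hs1 hr1.
Qed.


Lemma a_real : a \is Num.real.
Proof. by apply: qf_real => //; apply: real_mx_delta. Qed.
Lemma a_ge0 : 0 <= a.
Proof. by case: hY => _ _ h; apply: h; apply: real_mx_delta. Qed.

Lemma Xt_psd v : real_mx v -> 0 <= qf Xt v v.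
Proof.
move=> hv; rewrite qf_Xt.
have hYp : forall u, real_mx u -> 0 <= qf Y u u by case: hY => _ _ h.
have er : real_mx e by apply: real_mx_delta.
have gr : real_mx g by apply: real_mxM er Kreal.
set p := qf Y v e; set q := qf Y v g.
have pr : p \is Num.real by apply: qf_real.
have qr : q \is Num.real by apply: qf_real.
have [a0|an0] := eqVneq a 0.
  by rewrite a0 invr0 mul0r addr0; apply: hYp.
pose w := v - (p / a) *: e - (q / a) *: g.
have wr : real_mx w.
  have ar : a^-1 \is Num.real by rewrite rpredV a_real.
  apply: real_mxD; [apply: real_mxD => //|]; apply: real_mxN; apply: real_mxZ => //;
  by apply: rpredM.
have hw := hYp w wr.
have -> : qf Y v v + a^-1 * (q * q - p * p) = qf Y w w + a^-1 * (q * q) *+ 2.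
  rewrite /w !qfDl !qfDr !qfNl !qfNr !qfZl !qfZr.
  rewrite (@qfC _ Y e v hYs) (@qfC _ Y g v hYs) (@qfC _ Y g e hYs) qf_eg qf_gg -/p -/q -/a.
  by field.
apply: addr_ge0 => //; apply: mulrn_wge0; apply: mulr_ge0.
  by rewrite invr_ge0 a_ge0.
by move: qr; rewrite realEsqr expr2.
Qed.


Lemma Xt_sym : Xt^T = Xt.
Proof.
rewrite /Xt linearD /= linearZ /= linearD /= linearN /= !trmx_mul !trmxK hYs.
done.
Qed.

Lemma Xt_real : real_mx Xt.
Proof.
have er : real_mx e by apply: real_mx_delta.
have rr : real_mx r by apply: real_mxM.
have sr : real_mx s by apply: real_mxM rr Kreal.
apply: real_mxD => //; apply: real_mxZ; first by rewrite rpredV a_real.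
apply: real_mxD; last apply: real_mxN; apply: real_mxM => //; exact: real_mxT.
Qed.

Lemma Xt_diag : Xt i0 i0 = 0.
Proof.
rewrite -qf_delta -/e qf_Xt -/a qf_eg mul0r sub0r.
have [a0|an0] := eqVneq a 0; first by rewrite a0 invr0 mul0r addr0.
by field.
Qed.

Lemma Xt_tr (Z : 'M[C]_n) : \tr (Lambda Z *m Xt) = \tr (Lambda Z *m Y).
Proof.
rewrite /Xt mulmxDr linearD /= -scalemxAr linearZ /= mulmxBr linearB /=.
suff -> : \tr (Lambda Z *m (s^T *m s)) = \tr (Lambda Z *m (r^T *m r)).
  by rewrite subrr mulr0 addr0.
rewrite (mulmxA (Lambda Z) s^T s) (mulmxA (Lambda Z) r^T r) (mxtrace_mulC (Lambda Z *m s^T)) (mxtrace_mulC (Lambda Z *m r^T)).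
congr (\tr _).
rewrite /s /r !trmx_mul hYs KT !mulNmx !mulmxN !mulmxA.
rewrite -(mulmxA _ Kmx (Lambda Z)) -LK mulmxA -(mulmxA _ Kmx Kmx) KK.
by rewrite mulmxN mulmx1 !mulNmx opprK.
Qed.

End Main.
End Aux.

Unset Implicit Arguments.

Theorem mainTheorem18 (C : numClosedFieldType) (n m : nat)
  (hn : (0 < n)%N) (hm : (0 < m)%N)
  (H0 : 'M[C]_n) (H : 'I_m -> 'M[C]_n) (h : 'I_m -> C)
  (hH0 : hermitian_mx H0) (hH : forall i, hermitian_mx (H i))
  (hh : forall i, h i \is Num.real)
  (X : 'M[C]_(n + n)) (hX : sdpR_feasible H h X) :
  exists Xt : 'M[C]_(n + n),
    [/\ sdpR_feasible H h Xt,
        Xt (Ordinal (ltn_addr n hn)) (Ordinal (ltn_addr n hn)) = 0,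
        \tr (Lambda H0 *m Xt) = \tr (Lambda H0 *m X) &
        forall i, \tr (Lambda (H i) *m Xt) = \tr (Lambda (H i) *m X)].
Proof.
case: hX => hXp hXc.
have hYp := Y_psd hXp.
have hYK := @Y_comm C n X.
exists (Xt (Yof X) (Ordinal (ltn_addr n hn))).
have htr : forall Z : 'M[C]_n,
    \tr (Lambda Z *m Xt (Yof X) (Ordinal (ltn_addr n hn))) = \tr (Lambda Z *m X).
  by move=> Z; rewrite Xt_tr // Y_tr.
split => //.
- split; last by move=> i; rewrite htr.
  split; [exact: Xt_real | exact: Xt_sym | move=> v hv].
  exact: (Xt_psd hYp hYK).
- exact: Xt_diag.
Qed.
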